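(* Let $n>2$ be even, let $G$ be a group of order $2n$ containing a cyclic subgroup $H$ of index $2$, let $j$ be the unique involution of $H$, and let $\{h_1,\dots,h_{n/2}\}$ be a set of representatives of the cosets of $\{1,j\}$ in $H$. Let $\Sigma=\{S_1,\dots,S_r\}$ be a starter in $G$ with associated subgroups $H_1,\dots,H_r$ such that $S_1=\{e\}$ with $\partial e=\{j\}$, and let $\mathcal F$ be the associated $G$-regular $1$-factorization, with fixed $1$-factor $F_1=Orb_G(e)$ and, for $i\ge2$, the $1$-factors $F_i^1,\dots,F_i^{t_i}$ forming the $G$-orbit of $F_i=\bigcup_{f\in S_i}Orb_{H_i}(f)$, where $t_i=[G:H_i]$. Let $R=R_2\cup\dots\cup R_r$ be a subgraph of $K_{2n}$ such that: (1) for each $i\in\{2,\dots,r\}$, $R_i$ consists of $t_i$ edges, one in each of the $1$-factors $F_i^1,\dots,F_i^{t_i}$, and the set of distinct elements of $\partial R_i$ equals $\partial S_i$; (2) if $l$ is a long edge of $R_i$ ($2\le i\le r$), there is exactly one edge $l'\in R_i$ with $\partial l=\partial l'$ and $l'\notin Orb_H(l)$; if $l$ is a short edge of $R_i$, it is the unique edge of $R_i$ with difference set $\partial l$; (3) there exist two distinct edges $e_1,e_2$ of $F_1$ with $Orb_H(e_1)\cap Orb_H(e_2)=\emptyset$ such that both $R\cup\{e_1\}$ and $R\cup\{e_2\}$ are spanning connected subgraphs of $K_{2n}$. Put $T_1=R\cup\{e_1\}$ and $T_2=Rj\cup\{e_2\}$. Then $\mathcal T=\{T_1h_1,\dots,T_1h_{n/2}\}\cup\{T_2h_1,\dots,T_2h_{n/2}\}$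 is a complete set of rainbow spanning trees for $\mathcal F$.
   Context: Vertices of $K_{2n}$ are the elements of $G$; $G$ acts by right multiplication: $[x,y]\cdot g=[xg,yg]$, and for a set $U$ of edges $Ug=\{[xg,yg]:[x,y]\in U\}$. $Orb_K(f)$ denotes the orbit of an edge $f$ under a subgroup $K$. An edge $[x,y]$ is long if its $G$-orbit has length $2n$ and short if it has length $n$ (equivalently $x^{-1}y$ is an involution; this involution is the one associated with the short edge). Define $\partial([x,y])=\{xy^{-1},yx^{-1}\}$ if the edge is long and $\{xy^{-1}\}$ if short; $\phi([x,y])=\{x,y\}$ if long and $\{x\}$ if short; for a set $S$ of edges $\partial S,\phi(S)$ are the (multiset) unions. A starter in $G$ is a family $\{S_1,\dots,S_k\}$ of sets of edges with subgroups $H_1,\dots,H_k$ such that (i) $\partial S_1\cup\dots\cup\partial S_k=G\setminus\{1\}$ (as a set, without repetition); (ii) each $\phi(S_i)$ is a left transversal of $H_i$ in $G$; (iii) each $H_i$ contains the involutions associated with the short edges of $S_i$. The associated $G$-regular $1$-factorization consists of the $G$-orbits of the $1$-factors $F_i=\bigcup_{f\in S_i}Orb_{H_i}(f)$. A $1$-factorization is $G$-regular if $G$ (acting sharply transitively on vertices) permutes its $1$-factors. A rainbow spanning tree is a spanning tree with exactly one edge in each $1$-factor; a complete set of rainbow spanning trees is a set of such trees partitioning the edge set. *)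

(* Defs.v *)
From mathcomp Require Import all_boot all_order all_fingroup all_solvable.
Set Implicit Arguments. Unset Strict Implicit. Unset Printing Implicit Defensive.
Import GroupScope.

(* Vertices of K_{2n} are the elements of a finite group gT (the group G is [set: gT]).
   An edge of K_{2n} is a 2-element subset of gT. *)
Section Defs.
Variable gT : finGroupType.

Definition Kedges : {set {set gT}} := [set e : {set gT} | #|e| == 2].

Definition eact (e : {set gT}) (g : gT) : {set gT} := e :* g.
Definition esact (U : {set {set gT}}) (g : gT) : {set {set gT}} :=
  [set eact f g | f in U].

Definition orb (K : {set gT}) (e : {set gT}) : {set {set gT}} :=
  [set eact e g | g in K].

Definition long (e : {set gT}) : bool := #|orb [set: gT] e| == #|gT|.
Definition short (e : {set gT}) : bool := (#|orb [set: gT] e|).*2 == #|gT|.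

(* ∂[x,y] = {xy^-1, yx^-1} (a single element when the edge is short) *)
Definition dif (e : {set gT}) : {set gT} :=
  [set x * y^-1 | x in e, y in e & x != y].

(* starter edges are written [x,y] (ordered), since phi depends on x *)
Definition edge (p : gT * gT) : {set gT} := [set p.1; p.2].
Definition phi (p : gT * gT) : {set gT} :=
  if long (edge p) then [set p.1; p.2] else [set p.1].

(* starter {S_i} with subgroups H_i; multiset unions are expressed by counting *)
Definition starter (r : nat) (S : 'I_r -> {set gT * gT}) (Hs : 'I_r -> {group gT}) : Prop :=
  [/\ (forall i p, p \in S i -> p.1 != p.2),
      (forall g : gT,
          (\sum_(i < r) \sum_(p in S i) nat_of_bool (g \in dif (edge p)))%N
          = nat_of_bool (g != 1)),
      (forall i, forall C, C \in lcosets (Hs i) [set: gT] ->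
          (\sum_(p in S i) #|phi p :&: C|)%N = 1%N) &
      (forall i p, p \in S i -> short (edge p) -> p.1^-1 * p.2 \in Hs i)].

Definition factor r (S : 'I_r -> {set gT * gT}) (Hs : 'I_r -> {group gT}) (i : 'I_r)
  : {set {set gT}} := \bigcup_(p in S i) orb (Hs i) (edge p).

Definition factor_orbit r (S : 'I_r -> {set gT * gT}) (Hs : 'I_r -> {group gT}) (i : 'I_r)
  : {set {set {set gT}}} := [set esact (factor S Hs i) g | g : gT].

Definition factorization r (S : 'I_r -> {set gT * gT}) (Hs : 'I_r -> {group gT})
  : {set {set {set gT}}} := \bigcup_(i < r) factor_orbit S Hs i.

Definition adj (T : {set {set gT}}) : rel gT := fun x y => [set x; y] \in T.
Definition gconnected (T : {set {set gT}}) : Prop := forall x y, connect (adj T) x y.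
Definition acyclic (T : {set {set gT}}) : Prop :=
  forall s : seq gT, uniq s -> (2 < size s)%N -> ~~ path.cycle (adj T) s.
Definition spanning_tree (T : {set {set gT}}) : Prop :=
  [/\ T \subset Kedges, gconnected T & acyclic T].
Definition rainbow_spanning_tree (FF : {set {set {set gT}}}) (T : {set {set gT}}) : Prop :=
  spanning_tree T /\ forall F, F \in FF -> #|T :&: F| = 1%N.
Definition complete_rainbow (I : finType) (FF : {set {set {set gT}}})
  (Tr : I -> {set {set gT}}) : Prop :=
  (forall k, rainbow_spanning_tree FF (Tr k)) /\
  forall e, e \in Kedges -> #|[set k | e \in Tr k]| = 1%N.
End Defs.

(* Main.v *)
Require Import Defs.
From mathcomp Require Import all_boot all_order all_fingroup all_solvable zify.
Import GroupScope.
Set Implicit Arguments. Unset Strict Implicit. Unset Printing Implicit Defensive.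

Section Gen.
Variable gT : finGroupType.
Implicit Types (f l : {set gT}) (a b x y g d : gT).

Lemma mem_dif f d : reflect (exists a b, [/\ a \in f, b \in f, a != b & d = a * b^-1]) (d \in dif f).
Proof.
apply: (iffP imset2P).
  by case=> a b Ha; rewrite inE => /andP[Hb ab] ->; exists a, b.
by case=> a [b [Ha Hb ab ->]]; exists a b => //; rewrite inE Hb.
Qed.

Lemma eactE f g : eact f g = f :* g. Proof. by []. Qed.

Lemma eactM f x y : eact (eact f x) y = eact f (x * y).
Proof. by rewrite !eactE rcosetM. Qed.

Lemma eact1 f : eact f 1 = f.
Proof. by rewrite eactE rcoset1. Qed.

Lemma eactK f g : eact (eact f g) g^-1 = f.
Proof. by rewrite eactM mulgV eact1. Qed.

Lemma eact_inj g : injective (fun f : {set gT} => eact f g).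
Proof. by move=> f1 f2 /= E; rewrite -(eactK f1 g) E eactK. Qed.

Lemma card_eact f g : #|eact f g| = #|f|.
Proof. by rewrite eactE card_rcoset. Qed.

Lemma eact2 a b g : eact [set a; b] g = [set a * g; b * g].
Proof.
apply/setP=> z; rewrite eactE mem_rcoset !inE.
by rewrite !(canF_eq (mulgKV g)).
Qed.

Lemma dif_eact f g : dif (eact f g) = dif f.
Proof.
apply/setP=> d; apply/mem_dif/mem_dif.
  case=> a [b [Ha Hb ab ->]]; exists (a * g^-1), (b * g^-1).
  rewrite -!mem_rcoset; split=> //; first by rewrite (inj_eq (mulIg _)).
  by rewrite invMg invgK mulgA mulgKV.
case=> a [b [Ha Hb ab ->]]; exists (a * g), (b * g).
rewrite eactE !mem_rcoset !mulgK; split=> //; first by rewrite (inj_eq (mulIg _)).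
by rewrite invMg mulgA mulgK.
Qed.

Lemma dif2 f d : #|f| = 2 -> d \in dif f ->
  exists a b, [/\ f = [set a; b], a != b & a * b^-1 = d].
Proof.
move=> c2 /mem_dif[a [b [Ha Hb ab ->]]]; exists a, b; split=> //.
apply/eqP; rewrite eq_sym eqEcard c2 cards2 ab andbT.
by apply/subsetP=> z; rewrite !inE => /orP[]/eqP->.
Qed.

Lemma translate a b x y : a * b^-1 = x * y^-1 ->
  [set x; y] = eact [set a; b] (a^-1 * x).
Proof.
move=> E; rewrite eact2 mulKVg; congr [set _; _].
have -> : y = (y^-1)^-1 by rewrite invgK.
have -> : y^-1 = x^-1 * (a * b^-1) by rewrite E mulKg.
by rewrite !invMg !invgK mulgA.
Qed.

Lemma dif_neq0 f : #|f| = 2 -> exists d, d \in dif f.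
Proof.
move/eqP/cards2P=> [a [b [ab ->]]]; exists (a * b^-1); apply/mem_dif.
by exists a, b; rewrite !inE !eqxx orbT.
Qed.

End Gen.


Section Grp.
Variable gT : finGroupType.
Variable H : {group gT}.
Hypothesis H_index : #|[set: gT] : H| = 2%N.

Lemma card2_eq (T : finType) (X : {set T}) A B C :
  #|X| = 2 -> A \in X -> B \in X -> C \in X -> A != B -> A != C -> B = C.
Proof.
move=> c2 XA XB XC AB AC.
have : X = [set A; B].
  apply/eqP; rewrite eq_sym eqEcard cards2 AB c2 andbT.
  by apply/subsetP=> z; rewrite !inE => /orP[]/eqP->.
move=> EX; move: XC; rewrite EX !inE eq_sym (negbTE AC) /=.
by move/eqP.
Qed.

Lemma idx2 u v : u \notin H -> v \notin H -> u * v \in H.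
Proof.
move=> uH vH.
have mem x : H :* x \in rcosets H [set: gT].
  by rewrite mem_rcosets; apply/mulsgP; exists 1 x; rewrite ?group1 ?inE ?mul1g.
have neq x : x \notin H -> (H : {set gT}) != H :* x.
  move=> xH; apply/eqP=> E; case/negP: xH; rewrite E mem_rcoset mulgV group1 //.
have E := card2_eq H_index (mem 1) (mem u) (mem v^-1).
rewrite rcoset1 in E.
have : H :* u = H :* v^-1 by apply: E; apply: neq; rewrite ?groupV.
move=> E'; have : u \in H :* v^-1 by rewrite -E' mem_rcoset mulgV group1.
by rewrite mem_rcoset invgK.
Qed.

Lemma idx2V u v : u \notin H -> v \notin H -> u^-1 * v \in H.
Proof. by move=> uH vH; apply: idx2 => //; rewrite groupV. Qed.

Lemma idx2V' u v : u \notin H -> v \notin H -> u * v^-1 \in H.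
Proof. by move=> uH vH; apply: idx2 => //; rewrite groupV. Qed.

Hypothesis H_cyc : cyclic H.
Variable j : gT.
Hypothesis j_in : j \in H.
Hypothesis j_inv : #[j] = 2%N.

Lemma uniq_inv s : s \in H -> #[s] = 2%N -> s = j.
Proof.
move=> sH os.
have E : <[s]> :==: <[j]> by rewrite (eq_subG_cyclic H_cyc) ?cycle_subG // -!/(order _) os j_inv.
have : s \in <[j]> by rewrite -(eqP E) cycle_id.
case/cyclePmin=> i; rewrite j_inv; case: i => [|[|//]] _ Es; rewrite Es in os *.
  by move: os; rewrite expg0 => os; have := order_eq1 (1:gT); rewrite os eqxx.
by rewrite expg1.
Qed.

Lemma order2 (s : gT) : s != 1 -> s * s = 1 -> #[s] = 2%N.
Proof.
move=> s1 ss.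
have : #[s] %| 2 by rewrite order_dvdn expg2 ss.
have := order_gt0 s; rewrite -order_eq1 in s1.
case: #[s] s1 => [|[|[|k]]] //= _ _.
Qed.

Lemma j_central (x : gT) : j * x = x * j.
Proof.
have jx : j ^ x \in H.
  case: (boolP (x \in H)) => xH; first by rewrite groupJ.
  rewrite conjgE mulgA; apply: idx2 => //.
  apply/negP=> H1; case/negP: xH; rewrite -groupV.
  by rewrite -(mulgK j x^-1) groupM ?groupV.
have := uniq_inv jx; rewrite orderJ => /(_ j_inv) E.
by rewrite conjgC E.
Qed.

Lemma jj : j * j = 1.
Proof. by apply/eqP; rewrite -expg2 -order_dvdn j_inv. Qed.

End Grp.


Section Graph.
Variable gT : finGroupType.
Implicit Type T : {set {set gT}}.

Lemma adj_sym T : symmetric (adj T).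
Proof. by move=> u v; rewrite /adj setUC. Qed.

Section Dist.
Variable T : {set {set gT}}.
Hypothesis conT : gconnected T.

Definition Pd (v : gT) (k : nat) : bool :=
  [exists p : k.-tuple gT, path (adj T) v p && (last v p == 1)].

Lemma exPd v : exists k, Pd v k.
Proof.
have /connectP[p pp lp] := conT v 1.
exists (size p); apply/existsP; exists (in_tuple p); rewrite /= pp.
by rewrite -lp eqxx.
Qed.

Definition dist v := ex_minn (exPd v).

Lemma parent_ex v : v != 1 -> exists w, adj T v w && (dist w < dist v).
Proof.
move=> v1; rewrite /dist; case: ex_minnP => k /existsP[[[|w q] /= /eqP sz]].
  by rewrite /= => /eqP E; rewrite E eqxx in v1.
case/andP=> /andP[avw pq] lq min; exists w; rewrite avw /=.
case: ex_minnP => k' _ min'.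
have : Pd w (size q) by apply/existsP; exists (in_tuple q); rewrite /= pq lq.
by move/min'; rewrite -sz ltnS.
Qed.

Definition par v := odflt v [pick w | adj T v w && (dist w < dist v)].

Lemma parP v : v != 1 -> adj T v (par v) && (dist (par v) < dist v).
Proof.
move/parent_ex=> ex; rewrite /par; case: pickP => [w -> //|N].
by case: ex => w; rewrite N.
Qed.

Lemma conn_card : (#|gT| <= #|T| + 1)%N.
Proof.
pose F v := [set v; par v].
have inj : {in [set~ 1] &, injective F}.
  move=> v w; rewrite !inE => v1 w1 E.
  apply/eqP; apply: contraT => vw.
  have : v \in F w by rewrite -E !inE eqxx.
  rewrite !inE (negbTE vw) /= => /eqP pw.
  have : w \in F v by rewrite E !inE eqxx.
  rewrite !inE eq_sym (negbTE vw) /= => /eqP pv.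
  have /andP[_ h1] := parP v1; have /andP[_ h2] := parP w1.
  by rewrite -pv in h1; rewrite -pw in h2; have := ltn_trans h1 h2; rewrite ltnn.
have sub : F @: [set~ 1] \subset T.
  apply/subsetP=> f /imsetP[v]; rewrite !inE => v1 ->.
  by have /andP[] := parP v1.
have := subset_leq_card sub; rewrite card_in_imset // cardsC1.
by case: #|gT| => //= m; rewrite addn1.
Qed.
End Dist.

Lemma acyclic_of T : gconnected T -> (#|T| + 1 <= #|gT|)%N -> acyclic T.
Proof.
move=> conT cT s us ss; apply/negP => cyc.
case: s us ss cyc => [//|x p] us ss /=.
case: p us ss => [//|y q] us ss.
case: q us ss => [//|w q] us ss.
rewrite rcons_path => /andP[px azx].
set z := last x _ in azx.
set f := [set z; x].
have fT : f \in T := azx.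
move: us; rewrite cons_uniq => /andP[xn us].
have pT' : path (adj (T :\ f)) x [:: y, w & q].
  case/andP: px => axy pq; apply/andP; split.
    move: axy; rewrite /adj in_setD1 => ->; rewrite andbT; apply/negP=> /eqP E.
    have : y \in f by rewrite -E !inE eqxx orbT.
    rewrite !inE => /orP[/eqP yz|/eqP yx].
      move: us; rewrite cons_uniq => /andP[yq _].
      have : z \in w :: q by rewrite /z /= mem_last.
      by rewrite -yz (negbTE yq).
    by move: xn; rewrite yx inE eqxx.
  have ee' : {in [pred u | u != x] &, subrel (adj T) (adj (T :\ f))}.
    move=> u v /= ux vx; rewrite /adj in_setD1 => ->; rewrite andbT.
    apply/negP=> /eqP E; have : x \in [set u; v] by rewrite E !inE eqxx orbT.
    by rewrite !inE !(eq_sym x) (negbTE ux) (negbTE vx).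
  have hall : all [pred u | u != x] [:: y, w & q].
    by apply/allP=> u uin /=; apply/negP=> /eqP ux; rewrite -ux uin in xn.
  exact: (sub_in_path ee' hall pq).
have cxz : connect (adj (T :\ f)) x z by apply/connectP; exists [:: y, w & q].
have con' : gconnected (T :\ f).
  move=> a b; apply: (connect_sub _ (conT a b)) => u v auv.
  case: (boolP ([set u; v] == f)) => [/eqP E|ne].
    have symc := sym_connect_sym (adj_sym (T :\ f)).
    have : u \in f by rewrite -E !inE eqxx.
    have : v \in f by rewrite -E !inE eqxx orbT.
    rewrite !inE => /orP[]/eqP-> /orP[]/eqP->; rewrite ?connect0 //.
    by rewrite symc.
  by apply: connect1; move: auv; rewrite /adj in_setD1 ne => ->.
have := conn_card con'; move: cT; rewrite (cardsD1 f T) fT.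
rewrite add1n addSn => h1 h2; have := leq_trans h1 h2; by rewrite ltnn.
Qed.
End Graph.


Section Esact.
Variable gT : finGroupType.
Implicit Types (U T : {set {set gT}}) (f : {set gT}) (g x y : gT).

Lemma mem_esact U g f : (f \in esact U g) = (eact f g^-1 \in U).
Proof.
apply/imsetP/idP => [[f' f'U ->]|fU]; first by rewrite eactK.
by exists (eact f g^-1) => //; rewrite eactM mulVg eact1.
Qed.

Lemma esact_f U g f : f \in U -> eact f g \in esact U g.
Proof. by move=> fU; rewrite mem_esact eactK. Qed.

Lemma card_esact U g : #|esact U g| = #|U|.
Proof. by rewrite card_imset //; apply: eact_inj. Qed.

Lemma esactM U x y : esact (esact U x) y = esact U (x * y).
Proof. by apply/setP=> f; rewrite !mem_esact eactM invMg. Qed.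

Lemma esact1 U : esact U 1 = U.
Proof. by apply/setP=> f; rewrite mem_esact invg1 eact1. Qed.

Lemma esactI U T g : esact (U :&: T) g = esact U g :&: esact T g.
Proof. by apply/setP=> f; rewrite !inE !mem_esact inE. Qed.

Lemma esactU1 f U g : esact (f |: U) g = eact f g |: esact U g.
Proof. by rewrite /esact imsetU1. Qed.

Lemma adj_esact T g x y : adj (esact T g) x y = adj T (x * g^-1) (y * g^-1).
Proof. by rewrite /adj mem_esact eact2. Qed.

Lemma conn_esact T g : gconnected T -> gconnected (esact T g).
Proof.
move=> cT x y; have /connectP[p pp lp] := cT (x * g^-1) (y * g^-1).
apply/connectP; exists (map (fun u => u * g) p).
  have : path (adj (esact T g)) ((fun u => u * g) (x * g^-1)) (map (fun u => u * g) p).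
    rewrite (@path_map gT gT (fun u : gT => u * g)); apply: sub_path pp => u v /=.
    by rewrite adj_esact !mulgK.
  by rewrite /= mulgKV.
by rewrite -{1}(mulgKV g x) (@last_map gT gT (fun u : gT => u * g)) -lp mulgKV.
Qed.

Lemma esact_Kedges T g : T \subset Kedges gT -> esact T g \subset Kedges gT.
Proof.
move=> sT; apply/subsetP=> f; rewrite mem_esact => /(subsetP sT).
by rewrite !inE card_eact.
Qed.
End Esact.


Section Long.
Variable gT : finGroupType.
Implicit Types (a b g : gT).

Lemma sqV a b : (a * b^-1) * (a * b^-1) = 1 -> b * a^-1 = a * b^-1.
Proof.
move=> E; have : (a * b^-1)^-1 = a * b^-1.
  by apply/eqP; rewrite eq_invg_mul E.
by rewrite invMg invgK.
Qed.

Lemma stab a b : (a * b^-1) * (a * b^-1) = 1 -> eact [set a; b] (a^-1 * b) = [set a; b].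
Proof.
move=> E; rewrite eact2 mulKVg mulgA (sqV E) mulgKV.
by rewrite setUC.
Qed.

Lemma long_sq a b : a != b -> long [set a; b] -> (a * b^-1) * (a * b^-1) != 1.
Proof.
move=> ab L; apply/negP=> /eqP E.
move: L; rewrite /long /orb -(cardsT gT) => /imset_injP inj.
have := inj (a^-1 * b) 1 (in_setT _) (in_setT _).
rewrite eact1 stab // => /(_ erefl) /eqP.
by rewrite -eq_mulVg1 (negbTE ab).
Qed.

Lemma sq_long a b : a != b -> (a * b^-1) * (a * b^-1) != 1 -> long [set a; b].
Proof.
move=> ab sq; rewrite /long /orb -(cardsT gT); apply/imset_injP => g g' _ _ E.
set t := g * g'^-1.
have Et : eact [set a; b] t = [set a; b].
  by rewrite /t -eactM E eactM mulgV eact1.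
have : a * t \in [set a; b] by rewrite -Et eact2 !inE eqxx.
have : b * t \in [set a; b] by rewrite -Et eact2 !inE eqxx orbT.
have t1g : t = 1 -> g = g' by move=> t1; apply/eqP; rewrite eq_mulgV1 -/t t1.
rewrite !inE => /orP[]/eqP bt /orP[]/eqP at_.
- by apply: t1g; apply: (mulgI a); rewrite at_ mulg1.
- case/negP: sq; apply/eqP.
  have Et' : t = a^-1 * b by rewrite -at_ mulKg.
  rewrite Et' mulgA in bt.
  have E2 : b * a^-1 = a * b^-1 by rewrite -{2}bt mulgK.
  by rewrite -{2}E2 mulgA mulgKV mulgV.
- by apply: t1g; apply: (mulgI a); rewrite at_ mulg1.
- have t1 : t = 1 by apply: (mulgI b); rewrite bt mulg1.
  by rewrite t1 mulg1 in at_; rewrite at_ eqxx in ab.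
Qed.
End Long.


Lemma sum_pos_ex (I : finType) (P : pred I) (F : I -> nat) :
  (0 < \sum_(i | P i) F i)%N -> exists2 i, P i & (0 < F i)%N.
Proof.
case: (pickP (fun i => P i && (0 < F i)%N)) => [i /andP[] | N]; first by exists i.
rewrite big1 // => i Pi; have := N i; rewrite Pi /=; by case: (F i).
Qed.

Lemma card_sum (T : finType) (A : {set T}) : #|A| = \sum_(x : T) (x \in A).
Proof.
rewrite -sum1_card big_mkcond /=; apply: eq_bigr => x _; by case: (x \in A).
Qed.

Lemma card_bigcup_le (T I : finType) (P : pred I) (F : I -> {set T}) :
  (#|\bigcup_(i | P i) F i| <= \sum_(i | P i) #|F i|)%N.
Proof.
elim/big_rec2: _ => [|i m A _ h]; first by rewrite cards0.
rewrite cardsU; apply: leq_trans (leq_subr _ _) _; by rewrite leq_add2l.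
Qed.

Section Main.
Variable gT : finGroupType.
Variables (n : nat) (n_gt2 : (2 < n)%N) (n_even : ~~ odd n) (cardG : #|gT| = n.*2).
Variables (H : {group gT}) (H_cyc : cyclic H) (H_index : #|[set: gT] : H| = 2%N).
Variables (j : gT) (j_in : j \in H) (j_inv : #[j] = 2%N).
Variables (h : 'I_(n./2) -> gT) (h_in : forall k, h k \in H)
  (h_rep : forall C, C \in lcosets [set 1; j] H -> #|[set k | h k \in C]| = 1%N).
Variables (r : nat) (S : 'I_r.+1 -> {set gT * gT}) (Hs : 'I_r.+1 -> {group gT})
  (S_starter : starter S Hs).
Variables (e : gT * gT) (S1 : S ord0 = [set e]) (de : dif (edge e) = [set j]).
Variables (R : 'I_r.+1 -> {set {set gT}})
  (R_card : forall i, i != ord0 -> #|R i| = #|[set: gT] : Hs i|)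
  (R_sub : forall i, i != ord0 -> R i \subset \bigcup_(F in factor_orbit S Hs i) F)
  (R_one : forall i, i != ord0 -> forall F, F \in factor_orbit S Hs i -> #|R i :&: F| = 1%N)
  (R_dif : forall i, i != ord0 ->
     \bigcup_(f in R i) dif f = \bigcup_(p in S i) dif (edge p))
  (R_long : forall i, i != ord0 -> forall l, l \in R i -> long l ->
     #|[set l' in R i | (dif l' == dif l) && (l' \notin orb H l)]| = 1%N).
Variables (e1 e2 : {set gT}) (e1_in : e1 \in factor S Hs ord0) (e2_in : e2 \in factor S Hs ord0)
  (e12_orb : orb H e1 :&: orb H e2 = set0).

Definition Rall := \bigcup_(i | i != ord0) R i.
Definition D i := \bigcup_(p in S i) dif (edge p).

Lemma jc x : j * x = x * j. Proof. exact: (j_central H_index H_cyc j_in j_inv). Qed.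
Lemma jj' : j * j = 1. Proof. exact: (jj j_inv). Qed.

Lemma st_neq i p : p \in S i -> p.1 != p.2.
Proof. by case: S_starter => hh _ _ _; apply: hh. Qed.
Lemma st_dif g : (\sum_(i < r.+1) \sum_(p in S i) (g \in dif (edge p)))%N = (g != 1).
Proof. by case: S_starter => _ hh _ _; apply: hh. Qed.
Lemma st_tr i C : C \in lcosets (Hs i) [set: gT] -> (\sum_(p in S i) #|phi p :&: C|)%N = 1%N.
Proof. by case: S_starter => _ _ hh _; apply: hh. Qed.

Lemma cnt_pos i d : d \in D i -> (0 < \sum_(p in S i) (d \in dif (edge p)))%N.
Proof. by case/bigcupP => p pS dp; rewrite (bigD1 p) //= dp. Qed.

Lemma D_disj i i' d : d \in D i -> d \in D i' -> i = i'.
Proof.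
move=> di di'; apply/eqP; apply: contraT => ne.
have := st_dif d; rewrite (bigD1 i) //= (bigD1 i') /=; last by rewrite eq_sym.
have := cnt_pos di; have := cnt_pos di'; have := leq_b1 (d != 1).
set X := \sum_(p in S i) _; set Y := \sum_(p in S i') _; set Z := \sum_(i0 < r.+1 | _) _.
move=> a b c E; rewrite -E in a; move: a b c; clear; lia.
Qed.

Lemma D_cover d : d != 1 -> exists i, d \in D i.
Proof.
move=> d1; have := st_dif d; rewrite d1 => E.
have : (0 < \sum_(i < r.+1) \sum_(p in S i) (d \in dif (edge p)))%N by rewrite E.
case/sum_pos_ex => i _ /sum_pos_ex[p pS]; rewrite lt0b => dp.
by exists i; apply/bigcupP; exists p.
Qed.

Lemma D0 : D ord0 = [set j].
Proof. by rewrite /D S1 big_set1 de. Qed.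

Lemma j_notin i : i != ord0 -> j \notin D i.
Proof.
move=> i0; apply/negP=> ji; have : j \in D ord0 by rewrite D0 set11.
by move/(D_disj ji)/eqP; rewrite (negbTE i0).
Qed.


Definition cls i (f : {set gT}) := (#|f| == 2) && (dif f \subset D i).

Lemma cls_eact i f g : cls i f -> cls i (eact f g).
Proof. by rewrite /cls card_eact dif_eact. Qed.

Lemma cls_edge i p : p \in S i -> cls i (edge p).
Proof.
move=> pS; rewrite /cls /edge cards2 (st_neq pS) /=.
by apply/subsetP=> d dd; apply/bigcupP; exists p.
Qed.

Lemma cls_factor i f : f \in factor S Hs i -> cls i f.
Proof.
by case/bigcupP=> p pS /imsetP[g _ ->]; apply: cls_eact; apply: cls_edge.
Qed.

Lemma cls_orbit i F f : F \in factor_orbit S Hs i -> f \in F -> cls i f.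
Proof.
case/imsetP=> g _ ->; rewrite mem_esact => /cls_factor/(cls_eact g).
by rewrite eactM mulVg eact1.
Qed.

Lemma cls_uniq i i' f : cls i f -> cls i' f -> i = i'.
Proof.
case/andP=> /eqP c2 s1 /andP[_ s2]; have [d dd] := dif_neq0 c2.
exact: (D_disj (subsetP s1 _ dd) (subsetP s2 _ dd)).
Qed.

Lemma cls_R i f : i != ord0 -> f \in R i -> cls i f.
Proof. by move=> i0 /(subsetP (R_sub i0)) /bigcupP[F FO fF]; apply: cls_orbit fF. Qed.

Lemma Rall_cls f : f \in Rall -> exists2 i, i != ord0 & cls i f.
Proof. by case/bigcupP=> i i0 fR; exists i => //; apply: cls_R. Qed.

Lemma cls_form i f d : cls i f -> d \in dif f ->
  exists a b, [/\ f = [set a; b], a != b & a * b^-1 = d].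
Proof. by case/andP=> /eqP c2 _; apply: dif2. Qed.

Lemma cls0_form f : cls ord0 f -> exists a b, [/\ f = [set a; b], a != b & a * b^-1 = j].
Proof.
move=> cf; case/andP: (cf) => /eqP c2 sD; have [d dd] := dif_neq0 c2.
have := subsetP sD _ dd; rewrite D0 inE => /eqP dj; rewrite dj in dd.
exact: cls_form cf dd.
Qed.

Lemma e_form : e.1 * e.2^-1 = j /\ e.1 != e.2.
Proof.
have ne : e.1 != e.2 by apply: (@st_neq ord0); rewrite S1 set11.
split=> //; apply/set1P; rewrite -de; apply/mem_dif; exists e.1, e.2.
by rewrite /edge !inE !eqxx orbT.
Qed.

Lemma e_not_long : ~~ long (edge e).
Proof.
apply/negP=> L; have [E ne] := e_form; have := long_sq ne L.
by rewrite E jj' eqxx.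
Qed.

Lemma Hs0T : (Hs ord0 : {set gT}) = [set: gT].
Proof.
have inC x : e.1 \in x *: Hs ord0.
  have L : x *: Hs ord0 \in lcosets (Hs ord0) [set: gT] by apply/lcosetsP; exists x.
  have := st_tr L; rewrite S1 big_set1 /phi (negbTE e_not_long) => /eqP/cards1P[y E].
  have : y \in [set e.1] :&: x *: Hs ord0 by rewrite E set11.
  by rewrite !inE => /andP[/eqP-> ->].
apply/setP=> x; rewrite inE; have := inC x; rewrite mem_lcoset => h1.
have := inC 1; rewrite mem_lcoset invg1 mul1g => h2.
by rewrite -(groupV (Hs ord0)) -(mulgK e.1 x^-1) groupM // groupV.
Qed.

Lemma factor0 : factor S Hs ord0 = orb (Hs ord0) (edge e).
Proof. by rewrite /factor S1 big_set1. Qed.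

Lemma factor0P f : (f \in factor S Hs ord0) = cls ord0 f.
Proof.
apply/idP/idP; first exact: cls_factor.
case/cls0_form=> a [b [-> ab E]]; rewrite factor0.
have [E' _] := e_form; rewrite (translate (etrans E' (esym E))).
by apply/imsetP; exists (e.1^-1 * a); rewrite // Hs0T inE.
Qed.

Lemma ejfix f : cls ord0 f -> eact f j = f.
Proof.
case/cls0_form=> a [b [-> ab E]].
have Ea : a = j * b by rewrite -E mulgKV.
rewrite eact2 Ea.
have -> : j * b * j = b by rewrite (jc b) -mulgA jj' mulg1.
by rewrite -(jc b) setUC.
Qed.


Lemma rb_core e' F : cls ord0 e' -> F \in factorization S Hs ->
  #|(e' |: Rall) :&: F| = 1%N.
Proof.
move=> ce /bigcupP[i _ FO].
case: (eqVneq i ord0) => [i0|i0].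
  rewrite i0 in FO.
  have -> : (e' |: Rall) :&: F = [set e'].
    apply/setP=> f; rewrite !inE; apply/idP/idP.
      case/andP=> /orP[//|/Rall_cls[i' i'0 cf]] fF.
      by have := cls_uniq cf (cls_orbit FO fF) => E; rewrite E eqxx in i'0.
    move/eqP->; rewrite eqxx /=.
    case/imsetP: FO => g _ ->; rewrite mem_esact factor0P.
    exact: cls_eact.
  by rewrite cards1.
have -> : (e' |: Rall) :&: F = R i :&: F.
  apply/setP=> f; rewrite !inE; apply/idP/idP.
    case/andP=> /orP[/eqP->|/bigcupP[i' i'0 fR]] fF.
      by have := cls_uniq ce (cls_orbit FO fF) => E; rewrite -E eqxx in i0.
    have := cls_uniq (cls_R i'0 fR) (cls_orbit FO fF) => E.
    by rewrite -E fR fF.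
  case/andP=> fR ->; rewrite andbT; apply/orP; right.
  by apply/bigcupP; exists i.
exact: R_one.
Qed.

Lemma FF_esact F g : F \in factorization S Hs -> esact F g \in factorization S Hs.
Proof.
case/bigcupP=> i _ /imsetP[x _ ->]; apply/bigcupP; exists i => //.
by apply/imsetP; exists (x * g) => //; rewrite esactM.
Qed.

Lemma rb_trans T g : (forall F, F \in factorization S Hs -> #|T :&: F| = 1%N) ->
  forall F, F \in factorization S Hs -> #|esact T g :&: F| = 1%N.
Proof.
move=> hT F FF.
have -> : F = esact (esact F g^-1) g by rewrite esactM mulVg esact1.
by rewrite -esactI card_esact hT // FF_esact.
Qed.

Lemma sum_cosets (K : {group gT}) (A : {set gT}) :
  (\sum_(C in lcosets K [set: gT]) #|A :&: C|)%N = #|A|.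
Proof.
have E C : #|A :&: C| = (\sum_(x in A) (x \in C))%N.
  rewrite card_sum [RHS]big_mkcond /=; apply: eq_bigr => x _; rewrite inE.
  by case: (x \in A).
rewrite (eq_bigr _ (fun C _ => E C)) exchange_big /= card_sum big_mkcond /=.
apply: eq_bigr => x _; case: (x \in A) => //.
rewrite -big_mkcondr /= sum1dep_card.
have -> : [set C | (C \in lcosets K [set: gT]) && (x \in C)] = [set x *: K].
  apply/setP=> C; rewrite !inE; apply/andP/eqP.
    by case=> /lcosetsP[y _ ->] /lcoset_eqP ->.
  by move=> ->; split; [apply/lcosetsP; exists x | apply: lcoset_refl].
by rewrite cards1.
Qed.

Lemma idx_eq i : #|[set: gT] : Hs i| = (\sum_(p in S i) #|phi p|)%N.
Proof.
rewrite -card_lcosets -sum1_card.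
rewrite (eq_bigr (fun C => \sum_(p in S i) #|phi p :&: C|)%N); last first.
  by move=> C CL; rewrite st_tr.
rewrite exchange_big /=; apply: eq_bigr => p _.
by rewrite sum_cosets.
Qed.

Lemma phi_le i p : p \in S i -> (#|phi p| <= #|dif (edge p)|)%N.
Proof.
move=> pS; have ne := st_neq pS; rewrite /phi.
case: ifP => L.
  rewrite cards2 ne.
  have sq := long_sq ne L.
  have sub : [set p.1 * p.2^-1; p.2 * p.1^-1] \subset dif (edge p).
    apply/subsetP=> d; rewrite !inE => /orP[]/eqP->; apply/mem_dif.
      by exists p.1, p.2; rewrite /edge !inE !eqxx orbT.
    by exists p.2, p.1; split; rewrite /edge ?inE ?eqxx ?orbT // eq_sym.
  apply: leq_trans (subset_leq_card sub); rewrite cards2.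
  case: eqP => // E; case/negP: sq; rewrite {2}E.
  by rewrite mulgA mulgKV mulgV.
rewrite cards1 card_gt0; apply/set0Pn.
by apply: dif_neq0; rewrite /edge cards2 ne.
Qed.

Lemma idx_sum : (\sum_(i < r.+1) #|[set: gT] : Hs i| + 1 <= #|gT|)%N.
Proof.
have le1 : (\sum_(i < r.+1) #|[set: gT] : Hs i| <=
            \sum_(i < r.+1) \sum_(p in S i) \sum_(g : gT) (g \in dif (edge p)))%N.
  apply: leq_sum => i _; rewrite idx_eq; apply: leq_sum => p pS.
  by rewrite -card_sum; apply: phi_le pS.
have E2 : (\sum_(i < r.+1) \sum_(p in S i) \sum_(g : gT) (g \in dif (edge p)))%N
          = (\sum_(g : gT) (g != 1%g))%N.
  rewrite (eq_bigr (fun i => \sum_(g : gT) \sum_(p in S i) (g \in dif (edge p)))%N).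
    by rewrite exchange_big /=; apply: eq_bigr => g _; rewrite st_dif.
  by move=> i _; rewrite exchange_big.
have E3 : (\sum_(g : gT) (g != 1%g))%N = #|gT|.-1.
  by rewrite -(cardsC1 1) card_sum; apply: eq_bigr => g _; rewrite !inE.
rewrite E2 E3 in le1.
have := cardG; have := n_gt2; move: le1; clear; lia.
Qed.

Lemma size_bound : (#|Rall| + 2 <= #|gT|)%N.
Proof.
have := idx_sum; rewrite (bigD1 ord0) //=.
have : (0 < #|[set: gT] : Hs ord0|)%N := indexg_gt0 _ _.
have : (#|Rall| <= \sum_(i < r.+1 | i != ord0) #|[set: gT] : Hs i|)%N.
  apply: leq_trans (card_bigcup_le _ _) _.
  by rewrite leq_eqVlt; apply/orP; left; apply/eqP; apply: eq_bigr => i i0; rewrite R_card.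
move=> A B C; set X := #|[set: gT] : Hs ord0| in B C; set Y := \sum_(i < r.+1 | i != ord0) _ in A C; set Z := #|Rall| in A *; set W := #|gT| in C *.
clearbody X Y Z W; lia.
Qed.


Lemma hk_dec g : g \in H -> exists k, g = h k \/ g = h k * j.
Proof.
move=> gH; have L : g *: [set 1; j] \in lcosets [set 1; j] H by apply/lcosetsP; exists g.
have := h_rep L => c1; have : (0 < #|[set k | h k \in g *: [set 1%g; j]]|)%N by rewrite c1.
case/card_gt0P=> k; rewrite !inE mem_lcoset !inE => /orP[]/eqP E; exists k.
  by left; rewrite -(mulKVg g (h k)) E mulg1.
by right; rewrite -(mulKVg g (h k)) E -mulgA jj' mulg1.
Qed.

Lemma idx2' u v : u \notin H -> v \notin H -> u * v \in H.
Proof. exact: idx2. Qed.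

Lemma cover0 f : f \in Kedges gT -> exists2 g, g \in H &
  [\/ f \in esact Rall g, f = eact e1 g | f = eact e2 g].
Proof.
rewrite inE => /cards2P[x [y [xy ->]]].
have d1 : x * y^-1 != 1 by rewrite -eq_mulgV1.
have [i di] := D_cover d1.
case: (eqVneq i ord0) => [i0|i0].
  move: di; rewrite i0 D0 inE => /eqP di.
  have ce1 : cls ord0 e1 by rewrite -factor0P.
  have ce2 : cls ord0 e2 by rewrite -factor0P.
  have [a1 [b1 [Ee1 _ E1]]] := cls0_form ce1.
  have [a2 [b2 [Ee2 _ E2]]] := cls0_form ce2.
  have T1 := translate (etrans E1 (esym di)).
  have T2 := translate (etrans E2 (esym di)).
  rewrite -Ee1 in T1; rewrite -Ee2 in T2.
  case: (boolP (a1^-1 * x \in H)) => g1H; first by exists (a1^-1 * x) => //; apply: Or32.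
  case: (boolP (a2^-1 * x \in H)) => g2H; first by exists (a2^-1 * x) => //; apply: Or33.
  have : e1 \in orb H e1 :&: orb H e2.
    rewrite inE; apply/andP; split; apply/imsetP.
      by exists 1; rewrite ?group1 ?eact1.
    exists ((a2^-1 * x) * (a1^-1 * x)^-1); first by apply: idx2'; rewrite ?groupV.
    by rewrite -eactM -T2 T1 eactK.
  by rewrite e12_orb inE.
have dR : x * y^-1 \in \bigcup_(l in R i) dif l by rewrite R_dif.
case/bigcupP: dR => l lR dl.
have cl := cls_R i0 lR.
have [a [b [El ab Ed]]] := cls_form cl dl.
have Tf := translate Ed; rewrite -El in Tf.
have lRall : l \in Rall by apply/bigcupP; exists i.
case: (boolP (a^-1 * x \in H)) => gH.
  by exists (a^-1 * x) => //; apply: Or31; rewrite Tf esact_f.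
case: (eqVneq ((x * y^-1) * (x * y^-1)) 1) => [sq|sq].
  rewrite -Ed in sq.
  have st := stab sq; rewrite -El in st.
  have sH : a^-1 * b \notin H.
    apply/negP=> sH.
    have os : #[a^-1 * b] = 2%N.
      apply: order2; first by rewrite -eq_mulVg1.
      by rewrite mulgA -(mulgA _ b) (sqV sq) mulgA mulgKV mulVg.
    have := uniq_inv H_cyc j_in j_inv sH os => Es.
    have : x * y^-1 = j.
      rewrite -Ed; have -> : b = a * j by rewrite -Es mulKVg.
      have jV : j^-1 = j by apply/eqP; rewrite eq_invg_mul jj'.
      by rewrite invMg mulgA jV -(jc a) mulgK.
    move=> Ej; rewrite Ej in di; have := j_notin i0; by rewrite di.
  exists ((a^-1 * b) * (a^-1 * x)); first exact: idx2'.
  by apply: Or31; rewrite Tf -{1}st eactM esact_f.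
have L : long l by rewrite El; apply: (sq_long ab); rewrite Ed.
have := R_long i0 lR L => c1.
have : (0 < #|[set l' in R i | (dif l' == dif l) && (l' \notin orb H l)]|)%N by rewrite c1.
case/card_gt0P=> l'; rewrite inE => /andP[l'R /andP[/eqP dl' nl']].
have cl' := cls_R i0 l'R.
rewrite -dl' in dl.
have [a' [b' [El' ab' Ed']]] := cls_form cl' dl.
have Tl' := translate (etrans Ed (esym Ed')); rewrite -El -El' in Tl'.
have uH : a^-1 * a' \notin H.
  by apply/negP=> uH; case/negP: nl'; apply/imsetP; exists (a^-1 * a').
have Tf' := translate Ed'; rewrite -El' in Tf'.
exists (a'^-1 * x).
  have -> : a'^-1 * x = (a^-1 * a')^-1 * (a^-1 * x).
    by rewrite invMg invgK -mulgA mulKVg.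
  by apply: idx2'; rewrite ?groupV.
apply: Or31; rewrite Tf' esact_f //.
by apply/bigcupP; exists i.
Qed.


Lemma count_one (X : finType) (A : {set X}) (c : X -> nat) :
  (forall x, x \in A -> 0 < c x)%N -> (\sum_(x in A) c x <= #|A|)%N ->
  forall x, x \in A -> c x = 1%N.
Proof.
move=> pos le x xA; apply/eqP; rewrite eqn_leq pos // andbT.
rewrite (bigD1 x) //= in le.
have h1 : (\sum_(y in A | y != x) 1 <= \sum_(y in A | y != x) c y)%N.
  by apply: leq_sum => y /andP[yA _]; apply: pos.
have h2 : (\sum_(y in A | y != x) 1)%N = #|A :\ x|.
  by rewrite sum1dep_card; apply: eq_card => y; rewrite !inE andbC.
have h3 := cardsD1 x A; rewrite xA in h3.
rewrite h2 in h1; move: le h1 h3; clear; lia.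
Qed.

Lemma Kedges_card : #|Kedges gT| = (n * (n.*2).-1)%N.
Proof. by rewrite /Kedges card_draws cardG bin2 -doubleMl doubleK. Qed.

Lemma tree_sub e' : cls ord0 e' -> e' |: Rall \subset Kedges gT.
Proof.
move=> ce; apply/subsetP=> f; rewrite !inE => /orP[/eqP->|/Rall_cls[i _ /andP[]//]].
by case/andP: ce.
Qed.

Lemma tree_ok e' g : cls ord0 e' -> gconnected (e' |: Rall) ->
  rainbow_spanning_tree (factorization S Hs) (esact (e' |: Rall) g).
Proof.
move=> ce cT; split; last by apply: rb_trans => F FF; apply: rb_core.
split; first exact: esact_Kedges (tree_sub ce).
  exact: conn_esact.
apply: acyclic_of; first exact: conn_esact.
rewrite card_esact cardsU1; have := size_bound; case: (e' \notin Rall) => /=; lia.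
Qed.

Lemma eact_hj e' k : cls ord0 e' -> eact e' (h k * j) = eact e' (h k).
Proof. by move=> ce; rewrite -jc -eactM ejfix. Qed.

Lemma main (conn1 : gconnected (e1 |: Rall)) (conn2 : gconnected (e2 |: Rall)) :
  complete_rainbow (factorization S Hs)
    (fun bk : bool * 'I_(n./2) =>
       esact (if bk.1 then e1 |: Rall else e2 |: esact Rall j) (h bk.2)).
Proof.
have ce1 : cls ord0 e1 by rewrite -factor0P.
have ce2 : cls ord0 e2 by rewrite -factor0P.
have T2E : e2 |: esact Rall j = esact (e2 |: Rall) j by rewrite esactU1 ejfix.
set Tr := fun bk : bool * 'I_(n./2) => _.
have trees bk : rainbow_spanning_tree (factorization S Hs) (Tr bk).
  case: bk => [[] k]; rewrite /Tr /=; first exact: tree_ok.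
  by rewrite T2E esactM; apply: tree_ok.
have cov : forall f, f \in Kedges gT -> exists k, f \in Tr k.
  move=> f fK; have [g gH cs] := cover0 fK; have [k Eg] := hk_dec gH.
  case: cs => [fR|->|->]; case: Eg => Eg; subst g.
  - by exists (true, k); rewrite /Tr /= mem_esact; apply/setU1r; rewrite -mem_esact.
  - exists (false, k); rewrite /Tr /= mem_esact; apply/setU1r.
    rewrite mem_esact eactM -invMg jc -mem_esact.
    exact: fR.
  - by exists (true, k); rewrite /Tr /= esact_f // setU11.
  - by exists (true, k); rewrite /Tr /= eact_hj // esact_f // setU11.
  - by exists (false, k); rewrite /Tr /= esact_f // setU11.
  - by exists (false, k); rewrite /Tr /= eact_hj // esact_f // setU11.
have Tsub k : Tr k \subset Kedges gT by case: (trees k) => [[]].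
split=> //.
apply: (count_one (A := Kedges gT) (c := fun f => #|[set k | f \in Tr k]|)).
  by move=> f' /cov[k fk]; apply/card_gt0P; exists k; rewrite inE.
have E1 : (\sum_(f in Kedges gT) #|[set k | f \in Tr k]|)%N = (\sum_k #|Tr k|)%N.
  rewrite (eq_bigr (fun f => \sum_k (f \in Tr k))%N); last first.
    by move=> f' _; rewrite card_sum; apply: eq_bigr => k _; rewrite inE.
  rewrite exchange_big /=; apply: eq_bigr => k _.
  rewrite card_sum big_mkcond /=; apply: eq_bigr => f' _.
  case: (boolP (f' \in Kedges gT)) => // fK'; case: (boolP (f' \in Tr k)) => // fT.
  by case/negP: fK'; apply: (subsetP (Tsub k)).
rewrite E1 Kedges_card.
have bnd k : (#|Tr k| <= (n.*2).-1)%N.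
  have cb e' : (#|e' |: Rall| + 1 <= #|gT|)%N.
    by rewrite cardsU1; have := size_bound; case: (e' \notin Rall) => /=; lia.
  case: k => [[] k]; rewrite /Tr /= ?T2E ?card_esact; have := cb e1; have := cb e2;
    rewrite cardG -mul2n -subn1.
    by move=> _ hh; move: hh; set X := #|_|; clearbody X; lia.
    by move=> hh _; move: hh; set X := #|_|; clearbody X; lia.
apply: (@leq_trans (\sum_(k : bool * 'I_(n./2)) (n.*2).-1)); first by apply: leq_sum.
rewrite sum_nat_const card_prod card_bool card_ord mul2n halfK (negbTE n_even) subn0.
by [].
Qed.

End Main.


Theorem lemma1p2 (gT : finGroupType) (n : nat) (n_gt2 : (2 < n)%N) (n_even : ~~ odd n)
  (cardG : #|gT| = n.*2)
  (H : {group gT}) (H_cyc : cyclic H) (H_index : #|[set: gT] : H| = 2%N)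
  (j : gT) (j_in : j \in H) (j_inv : #[j] = 2%N)
  (h : 'I_(n./2) -> gT) (h_in : forall k, h k \in H)
  (h_rep : forall C, C \in lcosets [set 1; j] H -> #|[set k | h k \in C]| = 1%N)
  (r : nat) (S : 'I_r.+1 -> {set gT * gT}) (Hs : 'I_r.+1 -> {group gT})
  (S_starter : starter S Hs)
  (e : gT * gT) (S1 : S ord0 = [set e]) (de : dif (edge e) = [set j])
  (R : 'I_r.+1 -> {set {set gT}})
  (R_card : forall i, i != ord0 -> #|R i| = #|[set: gT] : Hs i|)
  (R_sub : forall i, i != ord0 -> R i \subset \bigcup_(F in factor_orbit S Hs i) F)
  (R_one : forall i, i != ord0 -> forall F, F \in factor_orbit S Hs i -> #|R i :&: F| = 1%N)
  (R_dif : forall i, i != ord0 ->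
     \bigcup_(f in R i) dif f = \bigcup_(p in S i) dif (edge p))
  (R_long : forall i, i != ord0 -> forall l, l \in R i -> long l ->
     #|[set l' in R i | (dif l' == dif l) && (l' \notin orb H l)]| = 1%N)
  (R_short : forall i, i != ord0 -> forall l, l \in R i -> short l ->
     forall l', l' \in R i -> dif l' = dif l -> l' = l)
  (e1 e2 : {set gT}) (e1_in : e1 \in factor S Hs ord0) (e2_in : e2 \in factor S Hs ord0)
  (e12 : e1 != e2) (e12_orb : orb H e1 :&: orb H e2 = set0)
  (conn1 : gconnected (e1 |: \bigcup_(i | i != ord0) R i))
  (conn2 : gconnected (e2 |: \bigcup_(i | i != ord0) R i)) :
  let Rall := \bigcup_(i | i != ord0) R i in
  let T1 := e1 |: Rall in
  let T2 := e2 |: esact Rall j in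
  complete_rainbow (factorization S Hs)
    (fun bk : bool * 'I_(n./2) => esact (if bk.1 then T1 else T2) (h bk.2)).
Proof.
move=> Rall0 T1 T2.
exact: (main n_gt2 n_even cardG H_cyc H_index j_in j_inv h_rep S_starter S1 de
  R_card R_sub R_one R_dif R_long e1_in e2_in e12_orb conn1 conn2).
Qed.
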